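(* Let $(X,d)$ be a complete metric space and let $\{T_i\}_{i\in\mathbb{N}}$ be a sequence of continuous maps $T_i:X\to X$ having a compact invariant set $C\subseteq X$ (i.e., $T_i(C)\subseteq C$ for all $i$). Assume that $T_i$ converges uniformly on $C$ to a map $T:X\to X$ which is Lipschitz with Lipschitz constant $\mu<1$, and let $p$ be the fixed point of $T$. Then for every $x\in C$, with $\Phi_k=T_k\circ T_{k-1}\circ\cdots\circ T_1$, $$\lim_{k\to\infty} d\big(\Phi_k(x),p\big)=0.$$
   Context: Uniform convergence on $C$ means $\sup_{x\in C} d(T_i(x),T(x))\to 0$ as $i\to\infty$. *)

(* Defs.v *)
From Stdlib Require Import Reals List.
Open Scope R_scope.

Definition is_metric {X : Type} (d : X -> X -> R) : Prop :=
  (forall x y, 0 <= d x y) /\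
  (forall x y, d x y = 0 <-> x = y) /\
  (forall x y, d x y = d y x) /\
  (forall x y z, d x z <= d x y + d y z).

Definition cauchy_seq {X : Type} (d : X -> X -> R) (u : nat -> X) : Prop :=
  forall eps, 0 < eps -> exists N, forall m n, (N <= m)%nat -> (N <= n)%nat -> d (u m) (u n) < eps.

Definition converges_to {X : Type} (d : X -> X -> R) (u : nat -> X) (l : X) : Prop :=
  forall eps, 0 < eps -> exists N, forall n, (N <= n)%nat -> d (u n) l < eps.

Definition complete_metric {X : Type} (d : X -> X -> R) : Prop :=
  forall u, cauchy_seq d u -> exists l, converges_to d u l.

Definition d_continuous {X : Type} (d : X -> X -> R) (f : X -> X) : Prop :=
  forall x eps, 0 < eps -> exists delta, 0 < delta /\
    forall y, d x y < delta -> d (f x) (f y) < eps.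

Definition d_open {X : Type} (d : X -> X -> R) (U : X -> Prop) : Prop :=
  forall x, U x -> exists r, 0 < r /\ forall y, d x y < r -> U y.

Definition d_compact {X : Type} (d : X -> X -> R) (C : X -> Prop) : Prop :=
  forall (I : Type) (U : I -> X -> Prop),
    (forall i, d_open d (U i)) ->
    (forall x, C x -> exists i, U i x) ->
    exists l : list I, forall x, C x -> exists i, In i l /\ U i x.

Definition lipschitz_with {X : Type} (d : X -> X -> R) (mu : R) (f : X -> X) : Prop :=
  0 <= mu /\ forall x y, d (f x) (f y) <= mu * d x y.

Definition unif_conv_on {X : Type} (d : X -> X -> R) (C : X -> Prop)
  (Ts : nat -> X -> X) (T : X -> X) : Prop :=
  forall eps, 0 < eps -> exists N, forall i, (N <= i)%nat ->
    forall x, C x -> d (Ts i x) (T x) <= eps.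

Fixpoint Phi {X : Type} (Ts : nat -> X -> X) (k : nat) (x : X) : X :=
  match k with
  | O => x
  | S k' => Ts (S k') (Phi Ts k' x)
  end.

(* Main.v *)
Require Import Defs.
From Stdlib Require Import Reals List Lra Lia.
Open Scope R_scope.

Lemma Phi_in (X : Type) (Ts : nat -> X -> X) (C : X -> Prop)
  (Hinv : forall i x, C x -> C (Ts i x)) x : C x -> forall k, C (Phi Ts k x).
Proof. intros Hx k; induction k; simpl; auto. Qed.

Theorem mainTheorem3 (X : Type) (d : X -> X -> R)
  (Hmet : is_metric d) (Hcomp : complete_metric d)
  (Ts : nat -> X -> X) (Hcont : forall i, d_continuous d (Ts i))
  (C : X -> Prop) (HC : d_compact d C)
  (Hinv : forall i x, C x -> C (Ts i x))
  (T : X -> X) (mu : R) (Hlip : lipschitz_with d mu T) (Hmu : mu < 1)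
  (Hunif : unif_conv_on d C Ts T)
  (p : X) (Hp : T p = p) :
  forall x, C x -> converges_to d (fun k => Phi Ts k x) p.
Proof.
  intros x Hx eps Heps.
  destruct Hmet as [Hpos [_ [_ Htri]]].
  destruct Hlip as [Hmu0 Hl].
  set (e' := eps * (1 - mu) / 2).
  assert (He' : 0 < e') by (unfold e'; nra).
  destruct (Hunif e' He') as [N HN].
  assert (Hstep : forall k, (N <= k)%nat ->
    d (Phi Ts (S k) x) p <= mu * d (Phi Ts k x) p + e').
  { intros k Hk. simpl.
    pose proof (Htri (Ts (S k) (Phi Ts k x)) (T (Phi Ts k x)) p) as H1.
    pose proof (HN (S k) ltac:(lia) (Phi Ts k x) (Phi_in X Ts C Hinv x Hx k)) as H2.
    pose proof (Hl (Phi Ts k x) p) as H3. rewrite Hp in H3. lra. }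
  set (b0 := d (Phi Ts N x) p).
  assert (Hb : forall m, d (Phi Ts (m + N) x) p <= mu ^ m * b0 + eps / 2).
  { induction m.
    - simpl. unfold b0. pose proof (Hpos (Phi Ts N x) p). lra.
    - replace (S m + N)%nat with (S (m + N)) by lia.
      pose proof (Hstep (m + N)%nat ltac:(lia)).
      simpl pow. unfold e' in *. nra. }
  assert (Hb0 : 0 <= b0) by apply Hpos.
  destruct (pow_lt_1_zero mu ltac:(apply Rabs_def1; lra) (eps / 2 / (b0 + 1)))
    as [M HM].
  { apply Rdiv_lt_0_compat; lra. }
  exists (M + N)%nat. intros n Hn.
  replace n with ((n - N) + N)%nat by lia.
  pose proof (Hb (n - N)%nat).
  pose proof (HM (n - N)%nat ltac:(lia)) as H4.
  assert (Hpw : 0 <= mu ^ (n - N)) by (apply pow_le; lra).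
  rewrite Rabs_right in H4 by lra.
  assert (mu ^ (n - N) * (b0 + 1) < eps / 2).
  { apply Rmult_lt_reg_r with (/ (b0 + 1)).
    - apply Rinv_0_lt_compat; lra.
    - rewrite Rmult_assoc, Rinv_r by lra. unfold Rdiv in H4. lra. }
  nra.
Qed.
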